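(* Let $\{z_n\}_{n\ge 0}$ be a sequence of positive real numbers satisfying $a_nz_{n+1}=b_nz_n+c_nz_{n-1}$ for all $n\ge 1$, where $a_n,b_n,c_n>0$. For $n\ge1$ let $\lambda_n=\frac{b_n+\sqrt{b_n^2+4a_nc_n}}{2a_n}$ be the positive root of $a_n\lambda^2-b_n\lambda-c_n=0$. Suppose that $z_0,z_1,z_2,z_3$ is log-convex (i.e. $z_0z_2\ge z_1^2$ and $z_1z_3\ge z_2^2$) and that $a_n\lambda_{n-1}\lambda_{n+1}-b_n\lambda_{n-1}-c_n\ge 0$ for all $n\ge 2$. Then $\{z_n\}_{n\ge 0}$ is log-convex.
   Context: A sequence $a_0,a_1,\ldots$ of nonnegative real numbers is log-convex if $a_{k-1}a_{k+1}\ge a_k^2$ for all $k\ge 1$. *)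

(* Defs.v *)
From Stdlib Require Import Reals.
Open Scope R_scope.

Definition log_convex (u : nat -> R) : Prop :=
  forall k : nat, (1 <= k)%nat -> u (k - 1)%nat * u (k + 1)%nat >= (u k) ^ 2.

Definition lam (a b c : nat -> R) (n : nat) : R :=
  (b n + sqrt (b n ^ 2 + 4 * a n * c n)) / (2 * a n).

(* Main.v *)
Require Import Defs.
From Stdlib Require Import Reals Lra Lia Psatz.
Open Scope R_scope.

Lemma lam_props (a b c : R) : 0<a -> 0<b -> 0<c ->
  let l := (b + sqrt (b^2+4*a*c))/(2*a) in 0 < l /\ a*l*l = b*l + c /\ b < a*l.
Proof.
  intros Ha Hb Hc. cbv zeta.
  set (s := sqrt (b^2+4*a*c)).
  assert (Hs2 : s*s = b^2+4*a*c) by (apply sqrt_sqrt; nra).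
  assert (Hs0 : 0 <= s) by apply sqrt_pos.
  assert (Hsb : b < s) by nra.
  replace ((b+s)/(2*a)) with ((b+s)/2/a) by (field; lra).
  assert (Hal : a*((b+s)/2/a) = (b+s)/2) by (field; lra).
  split; [apply Rdiv_lt_0_compat; lra|].
  split; [|lra].
  rewrite Hal. field_simplify; try lra. replace (s^2) with (s*s) by ring. rewrite Hs2. field. lra.
Qed.

Lemma F1 a b c l y w : 0<a -> 0<b -> 0<c -> 0<l -> a*l*l = b*l+c -> b < a*l ->
  0 < y -> a*w*y = b*y+c -> (y <= w <-> y <= l).
Proof.
  intros Ha Hb Hc Hl Hll Hbl Hy Hw.
  assert (Hg : a*y*y - b*y - c = (y-l)*(a*(y+l)-b)) by (replace c with (a*l*l - b*l) by lra; ring).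
  assert (Hp : 0 < a*(y+l)-b) by nra.
  split; intros.
  - destruct (Rle_dec y l); auto.
    assert (0 <= (a*y)*(w-y)) by (apply Rmult_le_pos; nra).
    assert (a*y*y <= b*y+c) by nra.
    assert (0 < (y-l)*(a*(y+l)-b)) by (apply Rmult_lt_0_compat; lra). nra.
  - assert ((y-l)*(a*(y+l)-b) <= 0).
    { assert (0 <= (l-y)*(a*(y+l)-b)) by (apply Rmult_le_pos; lra). lra. }
    assert (a*y*y <= a*w*y) by lra.
    assert (0 <= (a*y)*(w-y)) by nra.
    assert (0 <= w-y). { apply (Rmult_le_reg_l (a*y)); nra. }
    lra.
Qed.

Lemma F2 a b c l y w : 0<a -> 0<b -> 0<c -> 0<l -> a*l*l = b*l+c -> b < a*l ->
  0 < y -> a*w*y = b*y+c -> y <= l -> l <= w.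
Proof.
  intros Ha Hb Hc Hl Hll Hbl Hy Hw Hyl.
  assert (c*y <= c*l) by (apply Rmult_le_compat_l; lra).
  assert (E1 : (a*l*y)*l = b*l*y + c*y) by (replace (a*l*y*l) with ((a*l*l)*y) by ring; rewrite Hll; ring).
  assert (E2 : (a*w*y)*l = b*l*y + c*l) by (rewrite Hw; ring).
  assert (a*l*y <= a*w*y) by (apply (Rmult_le_reg_r l); lra).
  apply (Rmult_le_reg_l (a*y)); [nra|]. nra.
Qed.

Lemma F3 a b c m l' y w : 0<a -> 0<b -> 0<c -> 0<m ->
  0 < y -> a*w*y = b*y+c -> a*m*l' - b*m - c >= 0 -> m <= y -> w <= l'.
Proof.
  intros Ha Hb Hc Hm Hy Hw Hl Hmy.
  assert (c*m <= c*y) by (apply Rmult_le_compat_l; lra).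
  assert (y*(b*m+c) <= y*(a*m*l')) by (apply Rmult_le_compat_l; lra).
  assert (E : a*w*y*m = b*y*m + c*m) by (rewrite Hw; ring).
  assert (a*w*y*m <= a*m*l'*y) by nra.
  apply (Rmult_le_reg_l (a*y*m)); [apply Rmult_lt_0_compat; [apply Rmult_lt_0_compat|]; lra|]. nra.
Qed.

Theorem theorem3p1 (z a b c : nat -> R)
  (hz : forall n : nat, 0 < z n)
  (ha : forall n : nat, (1 <= n)%nat -> 0 < a n)
  (hb : forall n : nat, (1 <= n)%nat -> 0 < b n)
  (hc : forall n : nat, (1 <= n)%nat -> 0 < c n)
  (hrec : forall n : nat, (1 <= n)%nat ->
     a n * z (n + 1)%nat = b n * z n + c n * z (n - 1)%nat)
  (h02 : z 0%nat * z 2%nat >= (z 1%nat) ^ 2)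
  (h13 : z 1%nat * z 3%nat >= (z 2%nat) ^ 2)
  (hlam : forall n : nat, (2 <= n)%nat ->
     a n * lam a b c (n - 1)%nat * lam a b c (n + 1)%nat
       - b n * lam a b c (n - 1)%nat - c n >= 0) :
  log_convex z.
Proof.
  set (x := fun n => z (S n) / z n).
  assert (Hx : forall n, 0 < x n) by (intro; unfold x; apply Rdiv_lt_0_compat; auto).
  assert (HL : forall n, (1<=n)%nat -> let l := lam a b c n in
     0 < l /\ a n*l*l = b n*l + c n /\ b n < a n*l).
  { intros n Hn. apply lam_props; auto. }
  assert (Hr : forall j, a (S j) * x (S j) * x j = b (S j) * x j + c (S j)).
  { intro j. pose proof (hrec (S j) ltac:(lia)) as H.
    replace (S j + 1)%nat with (S (S j)) in H by lia.
    replace (S j - 1)%nat with j in H by lia.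
    unfold x. pose proof (hz j). pose proof (hz (S j)).
    field_simplify; [|lra|lra]. rewrite H. field. lra. }
  assert (HF1 : forall j, x j <= x (S j) <-> x j <= lam a b c (S j)).
  { intro j. destruct (HL (S j) ltac:(lia)) as [H1 [H2 H3]].
    apply (F1 (a (S j)) (b (S j)) (c (S j))); auto; try apply ha; try apply hb; try apply hc; lia. }
  assert (Hzx : forall j, z j * z (S (S j)) >= z (S j) ^ 2 <-> x j <= x (S j)).
  { intro j. pose proof (hz j). pose proof (hz (S j)). pose proof (hz (S (S j))).
    unfold x. split; intro Hq.
    - apply (Rmult_le_reg_r (z j * z (S j))); [nra|].
      replace (z (S j) / z j * (z j * z (S j))) with (z (S j) ^ 2) by (field; lra).
      replace (z (S (S j)) / z (S j) * (z j * z (S j))) with (z j * z (S (S j))) by (field; lra).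
      lra.
    - apply Rle_ge.
      replace (z (S j) ^ 2) with (z (S j) / z j * (z j * z (S j))) by (field; lra).
      replace (z j * z (S (S j))) with (z (S (S j)) / z (S j) * (z j * z (S j))) by (field; lra).
      apply Rmult_le_compat_r; nra. }
  assert (P : forall m, x m <= lam a b c (S m) /\ x (S m) <= lam a b c (S (S m))).
  { induction m as [|m [IH1 IH2]].
    - split; apply HF1; apply Hzx; assumption.
    - split; [exact IH2|].
      destruct (HL (S m) ltac:(lia)) as [H1 [H2 H3]].
      assert (Hge : lam a b c (S m) <= x (S m)).
      { apply (F2 (a (S m)) (b (S m)) (c (S m)) _ (x m)); auto; try apply ha; try apply hb; try apply hc; lia. }
      pose proof (hlam (S (S m)) ltac:(lia)) as Hl.
      replace (S (S m) - 1)%nat with (S m) in Hl by lia.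
      replace (S (S m) + 1)%nat with (S (S (S m))) in Hl by lia.
      apply (F3 (a (S (S m))) (b (S (S m))) (c (S (S m))) (lam a b c (S m)) _ (x (S m))); auto;
        try apply ha; try apply hb; try apply hc; lia. }
  intros k Hk. destruct k as [|j]; [lia|].
  replace (S j - 1)%nat with j by lia. replace (S j + 1)%nat with (S (S j)) by lia.
  apply Hzx. apply HF1. apply P.
Qed.
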